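(* Let $P\in\mathbb C[x_1,\dots,x_4,y_1,\dots,y_6]$ not depend on $y_3$, write $P=\sum_{i\ge0}y_1^iP_i$ with each $P_i$ independent of $y_1$, and suppose $\mathbf DP=\mathbf D_1P=\mathbf D_2P=\mathbf D_3P=\mathbf D_4P=0$, where $\mathbf D=\partial_{y_4}\partial_{y_3}-\partial_{y_5}\partial_{y_2}+\partial_{y_6}\partial_{y_1}$, $\mathbf D_1=\partial_{y_6}\partial_{x_4}-\partial_{y_2}\partial_{x_3}+\partial_{y_3}\partial_{x_2}$, $\mathbf D_2=\partial_{y_5}\partial_{x_4}-\partial_{y_1}\partial_{x_3}+\partial_{y_3}\partial_{x_1}$, $\mathbf D_3=\partial_{y_4}\partial_{x_4}-\partial_{y_1}\partial_{x_2}+\partial_{y_2}\partial_{x_1}$, $\mathbf D_4=\partial_{y_4}\partial_{x_3}-\partial_{y_5}\partial_{x_2}+\partial_{y_6}\partial_{x_1}$. Then there exists $K\in\mathbb C[x_1,\dots,x_4,y_1,\dots,y_6]$ depending neither on $y_1$ nor on $y_3$ such that $\mathbf DK=-\partial_{y_6}P_0$, $\mathbf D_1K=0$, $\mathbf D_2K=\partial_{x_3}P_0$, $\mathbf D_3K=\partial_{x_2}P_0$ and $\mathbf D_4K=0$. *)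

(* Defs.v *)
From HB Require Import structures.
From mathcomp Require Import all_boot all_order all_algebra.
From mathcomp Require Import Rstruct complex.
From mathcomp Require Import mpoly.
Set Implicit Arguments. Unset Strict Implicit. Unset Printing Implicit Defensive.
Import GRing.Theory Num.Theory.
Local Open Scope ring_scope.

Definition C : Type := (Rdefinitions.R)[i].
Definition CF : fieldType := (Rdefinitions.R)[i].

(* Polynomial ring C[x1..x4, y1..y6]; variables indexed by 'I_10:
   x_k (k=1..4) is index k-1, y_k (k=1..6) is index k+3. *)
Definition Pol := {mpoly CF[10]}.
Definition vx (k : nat) : 'I_10 := inord k.-1.
Definition vy (k : nat) : 'I_10 := inord (k + 3).

Definition pd (v : 'I_10) (p : Pol) : Pol := mderiv v p.

Definition indep (v : 'I_10) (p : Pol) : Prop :=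
  forall m : 'X_{1..10}, m \in msupp p -> m v = 0%N.

Definition opD (p : Pol) : Pol :=
  pd (vy 4) (pd (vy 3) p) - pd (vy 5) (pd (vy 2) p) + pd (vy 6) (pd (vy 1) p).
Definition opD1 (p : Pol) : Pol :=
  pd (vy 6) (pd (vx 4) p) - pd (vy 2) (pd (vx 3) p) + pd (vy 3) (pd (vx 2) p).
Definition opD2 (p : Pol) : Pol :=
  pd (vy 5) (pd (vx 4) p) - pd (vy 1) (pd (vx 3) p) + pd (vy 3) (pd (vx 1) p).
Definition opD3 (p : Pol) : Pol :=
  pd (vy 4) (pd (vx 4) p) - pd (vy 1) (pd (vx 2) p) + pd (vy 2) (pd (vx 1) p).
Definition opD4 (p : Pol) : Pol :=
  pd (vy 4) (pd (vx 3) p) - pd (vy 5) (pd (vx 2) p) + pd (vy 6) (pd (vx 1) p).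

(* Main.v *)
Require Import Defs.
From HB Require Import structures.
From mathcomp Require Import all_boot all_order all_algebra.
From mathcomp Require Import Rstruct complex.
From mathcomp Require Import mpoly.
Import GRing.Theory Num.Theory.
Local Open Scope ring_scope.
Lemma natCF n : (n.+1%:R : CF) != 0.
Proof. have := (@pnatr_eq0 (Rdefinitions.R)[i] n.+1). simpl. move=> ->. done. Qed.

Definition T (v : 'I_10) (p : Pol) : Pol :=
  \sum_(m <- msupp p) (((m v).+1%:R)^-1 * p@_m) *: 'X_[(m + U_(v))%MM].

Lemma sum_pick (s : seq 'X_{1..10}) (F : 'X_{1..10} -> CF) m0 : uniq s ->
  \sum_(m <- s) F m * (m == m0)%:R = if m0 \in s then F m0 else 0.
Proof.
move=> us; case: ifP => H.
  rewrite (bigD1_seq m0) //= eqxx mulr1 big1 ?addr0 // => m /negbTE ->.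
  by rewrite mulr0.
rewrite big1_seq // => m /andP[_ Hm].
have /negbTE -> : m != m0 by apply/negP => /eqP E; rewrite -E Hm in H.
by rewrite mulr0.
Qed.

Lemma Tcoef v p k : (T v p)@_k =
  if k v is 0%N then 0 else ((k v)%:R)^-1 * p@_(k - U_(v))%MM.
Proof.
rewrite /T raddf_sum /=.
under eq_bigr => m _ do rewrite mcoeffZ mcoeffX.
case E: (k v) => [|j].
  apply: big1 => m _.
  have -> : (m + U_(v) == k)%MM = false.
    apply/negbTE/eqP => h; move: E; rewrite -h mnmDE mnm1E eqxx addn1. done.
  by rewrite mulr0.
have hk : k = (k - U_(v) + U_(v))%MM.
  apply/mnmP => i; rewrite mnmDE mnmBE mnm1E; case: eqP => [<-|]; last first.
    by rewrite subn0 addn0.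
  by rewrite E subn1 addn1.
under eq_bigr => m _ do rewrite [in (_ == k)%MM]hk eqm_add2r.
rewrite sum_pick ?msupp_uniq //.
have hv : (k - U_(v))%MM v = j by rewrite mnmBE mnm1E eqxx E subn1.
rewrite hv; case: ifP => // /negbT H.
by rewrite memN_msupp_eq0 // mulr0.
Qed.
Lemma pdcoef v p m : (pd v p)@_m = p@_(m + U_(v))%MM *+ (m v).+1.
Proof. exact: mcoeff_deriv. Qed.
Lemma pdD v p q : pd v (p + q) = pd v p + pd v q. Proof. exact: mderivD. Qed.
Lemma pdN v p : pd v (- p) = - pd v p. Proof. exact: mderivN. Qed.
Lemma pdB v p q : pd v (p - q) = pd v p - pd v q. Proof. exact: mderivB. Qed.
Lemma pd0 v : pd v 0 = 0. Proof. exact: mderiv0. Qed.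
Lemma pdC u v p : pd u (pd v p) = pd v (pd u p). Proof. exact: mderiv_comm. Qed.

Lemma mnmUv (m : 'X_{1..10}) v : (m + U_(v))%MM v = (m v).+1.
Proof. by rewrite mnmDE mnm1E eqxx addn1. Qed.
Lemma mnmUu (m : 'X_{1..10}) u v : u != v -> (m + U_(u))%MM v = m v.
Proof. by move=> /negbTE h; rewrite mnmDE mnm1E h addn0. Qed.
Lemma mnmBu (m : 'X_{1..10}) u v : u != v -> (m - U_(u))%MM v = m v.
Proof. by move=> /negbTE h; rewrite mnmBE mnm1E h subn0. Qed.

Lemma pdT v p : pd v (T v p) = p.
Proof.
apply/mpolyP => m; rewrite pdcoef Tcoef mnmUv addmK.
by rewrite -mulrnAl -mulr_natr mulVf ?natCF // mul1r.

Qed.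

Lemma pdT_comm u v p : u != v -> pd u (T v p) = T v (pd u p).
Proof.
move=> uv; apply/mpolyP => k; rewrite pdcoef !Tcoef mnmUu //.
case E: (k v) => [|j]; first by rewrite mul0rn.
rewrite pdcoef mnmBu 1?eq_sym // -mulrnAr.
have -> : (k + U_(u) - U_(v))%MM = (k - U_(v) + U_(u))%MM; last by [].
apply/mnmP => i; rewrite !(mnmDE, mnmBE, mnm1E).
case: (eqVneq v i) => [<-|vi] /=; first by rewrite (negbTE uv) E /= !addn0 subn1.
by rewrite !subn0.
Qed.

Lemma TD v p q : T v (p + q) = T v p + T v q.
Proof. apply/mpolyP => k; rewrite mcoeffD !Tcoef mcoeffD; case: (k v) => [|j]; rewrite ?addr0 ?mulrDr //. Qed.
Lemma TN v p : T v (- p) = - T v p.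
Proof. apply/mpolyP => k; rewrite mcoeffN !Tcoef mcoeffN; case: (k v) => [|j]; rewrite ?oppr0 ?mulrN //. Qed.
Lemma TB v p q : T v (p - q) = T v p - T v q.
Proof. by rewrite TD TN. Qed.
Lemma T0 v : T v 0 = 0.
Proof. by apply/mpolyP => k; rewrite Tcoef !mcoeff0; case: (k v) => // j; rewrite mulr0. Qed.
Ltac dv := apply/eqP => /(congr1 val); rewrite /= !inordK.

Definition E (v : 'I_10) (p : Pol) : Pol := p - T v (pd v p).

Lemma pdE v p : pd v (E v p) = 0.
Proof. by rewrite /E pdB pdT subrr. Qed.
Lemma TpdE v p : T v (pd v p) = p - E v p.
Proof. by rewrite /E opprB addrC subrK. Qed.
Lemma E_free v p : pd v p = 0 -> E v p = p.
Proof. by move=> h; rewrite /E h T0 subr0. Qed.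
Lemma pdE_comm u v p : u != v -> pd u (E v p) = E v (pd u p).
Proof. by move=> uv; rewrite /E pdB (pdT_comm _ _ _ uv) (pdC u v p). Qed.
Lemma ED v p q : E v (p + q) = E v p + E v q.
Proof. by rewrite /E pdD TD opprD addrACA. Qed.
Lemma EN v p : E v (- p) = - E v p.
Proof. by rewrite /E pdN TN opprB opprK addrC. Qed.
Lemma EB v p q : E v (p - q) = E v p - E v q.
Proof. by rewrite ED EN. Qed.
Lemma E0 v : E v 0 = 0.
Proof. by rewrite /E pd0 T0 subr0. Qed.

Definition free (w : 'I_10) (p : Pol) := pd w p = 0.
Lemma freeT w v p : w != v -> free w p -> free w (T v p).
Proof. by rewrite /free => wv h; rewrite pdT_comm // h T0. Qed.
Lemma freeE w v p : w != v -> free w p -> free w (E v p).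
Proof. by rewrite /free => wv h; rewrite pdE_comm // h E0. Qed.
Lemma freeEs v p : free v (E v p).
Proof. exact: pdE. Qed.
Lemma freeD w p q : free w p -> free w q -> free w (p + q).
Proof. by rewrite /free pdD => -> ->; rewrite addr0. Qed.
Lemma freeN w p : free w p -> free w (- p).
Proof. by rewrite /free pdN => ->; rewrite oppr0. Qed.
Lemma freeB w p q : free w p -> free w q -> free w (p - q).
Proof. by rewrite /free pdB => -> ->; rewrite subr0. Qed.
Lemma free0 w : free w 0.
Proof. exact: pd0. Qed.
Lemma freepd w v p : free w p -> free w (pd v p).
Proof. by rewrite /free pdC => ->; rewrite pd0. Qed.

Lemma Ecoef v p m : (E v p)@_m = if m v is 0%N then p@_m else 0.
Proof.
rewrite /E mcoeffB Tcoef; case Ev: (m v) => [|j]; first by rewrite subr0.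
have le : (U_(v) <= m)%MM.
  by apply/mnm_lepP => i; rewrite mnm1E; case: eqP => [<-|]; rewrite ?Ev.
have hv : (m - U_(v))%MM v = j by rewrite mnmBE mnm1E eqxx Ev subn1.
rewrite pdcoef submK // hv -[p@_m *+ _]mulr_natl mulKf ?natCF //.
by rewrite subrr.
Qed.

Lemma Xmul_coef (v : 'I_10) (Y : Pol) (m : 'X_{1..10}) : m v = 0%N -> ('X_v * Y)@_m = 0.
Proof.
move=> h; apply: memN_msupp_eq0; rewrite mulrC (perm_mem (msuppMX _ _)).
apply/negP => /mapP [m' _ Em]; move: h; rewrite Em mnmDE mnm1E eqxx.
by rewrite add1n.
Qed.

Lemma E_mulX (v : 'I_10) (Y : Pol) : E v ('X_v * Y) = 0.
Proof.
apply/mpolyP => m; rewrite Ecoef mcoeff0; case Ev: (m v) => [|j] //.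
exact: Xmul_coef.
Qed.

Lemma indep_pd v p : indep v p <-> free v p.
Proof.
split => [H|H m Hm].
  apply/mpolyP => m; rewrite pdcoef mcoeff0 memN_msupp_eq0 ?mul0rn //.
  by apply/negP => /H; rewrite mnmUv.
case Ev: (m v) => [//|j]; exfalso.
have le : (U_(v) <= m)%MM.
  by apply/mnm_lepP => i; rewrite mnm1E; case: eqP => [<-|]; rewrite ?Ev.
have : (pd v p)@_(m - U_(v))%MM = 0 by rewrite H mcoeff0.
rewrite pdcoef submK // -mulr_natr => /eqP; rewrite mulf_eq0 (negbTE (natCF _)) orbF.
by move: Hm; rewrite mcoeff_msupp => /negbTE ->.
Qed.
Definition bnd (n : nat) (p : Pol) := forall m : 'X_{1..10}, (n <= mdeg m)%N -> p@_m = 0.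

Lemma bnd_msize p : bnd (msize p) p.
Proof. by move=> m h; apply: memN_msupp_eq0; apply: msize_mdeg_ge. Qed.
Lemma bnd0 p : bnd 0 p -> p = 0.
Proof. by move=> h; apply/mpolyP => m; rewrite mcoeff0; apply: h. Qed.
Lemma bnd_mono n n' p : (n <= n')%N -> bnd n p -> bnd n' p.
Proof. by move=> le h m hm; apply: h; apply: leq_trans hm. Qed.
Lemma bnd_pd n v p : bnd n.+1 p -> bnd n (pd v p).
Proof.
move=> h m hm; rewrite pdcoef h ?mul0rn //.
by rewrite mdegD mdeg1 addn1 ltnS.
Qed.
Lemma bnd_pd' n v p : bnd n p -> bnd n (pd v p).
Proof. by move=> h; exact: (bnd_pd _ _ _ (bnd_mono _ _ _ (leqnSn n) h)). Qed.
Lemma bndD n p q : bnd n p -> bnd n q -> bnd n (p + q).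
Proof. by move=> h1 h2 m hm; rewrite mcoeffD h1 ?h2 ?addr0. Qed.
Lemma bndN n p : bnd n p -> bnd n (- p).
Proof. by move=> h m hm; rewrite mcoeffN h ?oppr0. Qed.
Lemma bndB n p q : bnd n p -> bnd n q -> bnd n (p - q).
Proof. by move=> h1 h2; exact: (bndD _ _ _ h1 (bndN _ _ h2)). Qed.
Lemma bnd_pd2 n u v p : bnd n.+1 p -> bnd n (pd u (pd v p)).
Proof. by move=> h; exact: (bnd_pd' _ u _ (bnd_pd _ v _ h)). Qed.

Lemma nilp (L : Pol -> Pol) : (forall n p, bnd n.+1 p -> bnd n (L p)) ->
  forall p, iter (msize p) L p = 0.
Proof.
move=> hL p.
suff H : forall k n q, bnd (k + n) q -> bnd n (iter k L q).
  by apply: bnd0; apply: H; rewrite addn0; apply: bnd_msize.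
elim=> [|k IH] n q h /=; first by [].
by apply: hL; apply: IH; rewrite addnS -addSn.
Qed.
Definition Poi (u v : 'I_10) (F1 F2 : Pol) : Pol := T u F1 + E u (T v F2).
Lemma Poi1 u v F1 F2 : pd u (Poi u v F1 F2) = F1.
Proof. by rewrite /Poi pdD pdT pdE addr0. Qed.
Lemma Poi2 u v F1 F2 : u != v -> pd u F2 = pd v F1 -> pd v (Poi u v F1 F2) = F2.
Proof.
move=> uv h; have vu : v != u by rewrite eq_sym.
rewrite /Poi pdD (pdT_comm _ _ _ vu) (pdE_comm _ _ _ vu) pdT -h TpdE.
by rewrite subrK.
Qed.
Lemma freePoi w u v F1 F2 : w != u -> w != v -> free w F1 -> free w F2 ->
  free w (Poi u v F1 F2).
Proof.
move=> wu wv h1 h2; apply: freeD; first exact: freeT.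
by apply: freeE => //; apply: freeT.
Qed.

Lemma surj (u v : 'I_10) (L : Pol -> Pol) (S : Pol -> Prop) :
  u != v ->
  (forall p q, L (p - q) = L p - L q) ->
  (forall p, L (T u p) = T u (L p)) -> (forall p, L (T v p) = T v (L p)) ->
  (forall n p, bnd n.+1 p -> bnd n (L p)) ->
  (forall p q, S p -> S q -> S (p - q)) -> (forall p, S p -> S (T u p)) ->
  (forall p, S p -> S (T v p)) -> (forall p, S p -> S (L p)) ->
  forall f, S f -> exists q, S q /\ pd u (pd v q) + L q = f.
Proof.
move=> uv Lsub LTu LTv Lb Ssub STu STv SL f Sf.
have L0 : L 0 = 0 by have := Lsub 0 0; rewrite !subrr.
have iterT : forall k p, iter k L (T u (T v p)) = T u (T v (iter k L p)).
  by elim=> [|k IH] p //=; rewrite IH LTu LTv.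
have key : forall k g, S g -> iter k L g = 0 ->
    exists U, S U /\ U + T u (T v (L U)) = g.
  elim=> [|k IH] g Sg hg.
    by exists g; split => //; move: hg => /= ->; rewrite L0 !T0 addr0.
  pose h := T u (T v (L g)).
  have Sh : S h by rewrite /h; apply: STu; apply: STv; apply: SL.
  have hh : iter k L h = 0 by rewrite /h iterT -iterSr hg !T0.
  have [U' [SU' HU']] := IH h Sh hh.
  exists (g - U'); split; first exact: Ssub.
  have e : T u (T v (L U')) = h - U'.
    by rewrite -HU' [U' + _]addrC addrK.
  rewrite (Lsub g U') !TB e -/h.
  by rewrite (opprB h U') [h + _]addrC !subrK.
have [U [SU HU]] := key (msize f) f Sf (nilp L Lb f).
exists (T u (T v U)); split; first by apply: STu; apply: STv.
have vu : v != u by rewrite eq_sym.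
by rewrite (pdT_comm _ _ _ vu) !pdT LTu LTv.
Qed.
Lemma pdXn (w v : 'I_10) i : w != v -> pd w ('X_v ^+ i : Pol) = 0.
Proof.
move=> wv; rewrite /pd mpolyXn mderivX mulmnE mnm1E eq_sym (negbTE wv) mul0n.
by rewrite scale0r.
Qed.

Lemma pdSum (w : 'I_10) N (F : nat -> Pol) : w != vy 1 ->
  pd w (\sum_(i < N.+1) 'X_(vy 1) ^+ i * F i) =
  \sum_(i < N.+1) 'X_(vy 1) ^+ i * pd w (F i).
Proof.
move=> wv; rewrite (big_morph (pd w) (pdD w) (pd0 w)); apply: eq_bigr => i _.
by rewrite /pd mderivM -/(pd w _) (pdXn _ _ _ wv) mul0r add0r.
Qed.

Lemma SumB N (F G : nat -> Pol) :
  \sum_(i < N.+1) 'X_(vy 1) ^+ i * F i - \sum_(i < N.+1) 'X_(vy 1) ^+ i * G i =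
  \sum_(i < N.+1) 'X_(vy 1) ^+ i * (F i - G i).
Proof. by rewrite -sumrB; apply: eq_bigr => i _; rewrite mulrBr. Qed.
Lemma SumD N (F G : nat -> Pol) :
  \sum_(i < N.+1) 'X_(vy 1) ^+ i * F i + \sum_(i < N.+1) 'X_(vy 1) ^+ i * G i =
  \sum_(i < N.+1) 'X_(vy 1) ^+ i * (F i + G i).
Proof. by rewrite -big_split; apply: eq_bigr => i _; rewrite mulrDr. Qed.

Lemma coef0 N (F : nat -> Pol) : (forall i, free (vy 1) (F i)) ->
  \sum_(i < N.+1) 'X_(vy 1) ^+ i * F i = 0 -> F 0%N = 0.
Proof.
move=> fF h.
have e : \sum_(i < N.+1) 'X_(vy 1) ^+ i * F i =
   F 0%N + 'X_(vy 1) * \sum_(i < N) 'X_(vy 1) ^+ i * F i.+1.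
  rewrite big_ord_recl /= expr0 mul1r mulr_sumr; congr (_ + _).
  by apply: eq_bigr => i _; rewrite /bump /= exprS mulrA.
have := congr1 (E (vy 1)) h; rewrite e ED E_mulX addr0 E0 E_free //.
exact: fF.
Qed.
From mathcomp Require Import ring.
Lemma pdT2 a b c X : a != c -> b != c -> pd a (pd b (T c X)) = T c (pd a (pd b X)).
Proof. by move=> ac bc; rewrite (pdT_comm _ _ _ bc) (pdT_comm _ _ _ ac). Qed.
Lemma pdT2l b c X : b != c -> pd c (pd b (T c X)) = pd b X.
Proof. by move=> bc; rewrite (pdT_comm _ _ _ bc) pdT. Qed.
Lemma pdT2r a c X : pd a (pd c (T c X)) = pd a X.
Proof. by rewrite pdT. Qed.

Opaque T E Poi pd.

Lemma Zstep_B (t1 t2 r1 r2 : 'I_10) (Y Y' G G' : Pol) :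
  r1 != t1 -> t1 != t2 -> r1 != t2 -> r2 != t1 -> t2 != t1 ->
  pd r2 Y' = G' -> pd t1 Y' = 0 ->
  pd t1 (pd r1 Y) + pd r2 (pd t2 Y) = pd t1 G -> G' = E t1 (G - pd r1 Y) ->
  pd t1 (pd r1 (T t1 Y + T t2 Y')) + pd r2 (pd t2 (T t1 Y + T t2 Y')) = G.
Proof.
move=> d1 d2 d3 d4 d5 hG' fY' BY eG'.
have e1 : pd t1 (pd r1 (T t1 Y + T t2 Y')) = pd r1 Y.
  rewrite (pdD r1) (pdD t1) (pdT2l _ _ Y d1) (pdT2 _ _ _ Y' d2 d3) (pdC t1 r1 Y') fY'.
  by rewrite (pd0 r1) (T0 t2) (addr0 (pd r1 Y)).
have e2 : pd r2 (pd t2 (T t1 Y + T t2 Y')) = T t1 (pd r2 (pd t2 Y)) + G'.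
  by rewrite (pdD t2) (pdD r2) (pdT2 _ _ _ Y d4 d5) (pdT2r r2 t2 Y') hG'.
have e : pd r2 (pd t2 Y) = pd t1 G - pd t1 (pd r1 Y).
  by rewrite -BY (addrC (pd t1 (pd r1 Y))) (addrK (pd t1 (pd r1 Y))).
rewrite e1 e2 e (TB t1) (TpdE t1 G) (TpdE t1 (pd r1 Y)) eG' (EB t1 G (pd r1 Y)).
move: (E t1 G) (E t1 (pd r1 Y)) (pd r1 Y) => a b c.
ring.
Qed.

Lemma Zstep_m (t1 t2 p1 p2 r1 r2 : 'I_10) (Y Y' G H G' H' : Pol) :
  p2 != t1 -> r1 != t1 -> r2 != t1 -> p1 != t1 ->
  p2 != t2 -> r1 != t2 -> r2 != t2 -> p1 != t2 ->
  pd p2 (pd r1 Y) - pd r2 (pd p1 Y) = 0 -> pd r2 Y' = G' -> pd p2 Y' = H' ->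
  pd r1 H = pd p1 G -> G' = E t1 (G - pd r1 Y) -> H' = E t1 (H - pd p1 Y) ->
  pd p2 (pd r1 (T t1 Y + T t2 Y')) - pd r2 (pd p1 (T t1 Y + T t2 Y')) = 0.
Proof.
move=> a1 a2 a3 a4 b1 b2 b3 b4 mY hG' hH' c1 eG' eH'.
rewrite (pdD r1) (pdD p2) (pdD p1) (pdD r2) (pdT2 _ _ _ Y a1 a2) (pdT2 _ _ _ Y a3 a4).
rewrite (pdT2 _ _ _ Y' b1 b2) (pdT2 _ _ _ Y' b3 b4).
rewrite (pdC p2 r1 Y') hH' (pdC r2 p1 Y') hG'.
have cQ : pd r1 H' = pd p1 G'.
  rewrite eH' eG' (pdE_comm r1 t1 _ a2) (pdE_comm p1 t1 _ a4) (pdB r1 H) (pdB p1 G) c1.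
  rewrite (pdC r1 p1 Y); exact: erefl.
have mY' : pd r2 (pd p1 Y) = pd p2 (pd r1 Y).
  exact: (esym (subr0_eq mY)).
rewrite cQ mY'; exact: subrr.
Qed.

Lemma Zlem (t1 t2 p1 p2 r1 r2 : 'I_10) :
  r2 != t1 -> p2 != t1 -> r2 != p2 -> p1 != t1 -> r1 != t1 -> t2 != t1 ->
  r2 != t2 -> p2 != t2 -> p1 != t2 -> r1 != t2 ->
  forall k (G H : Pol), bnd k G -> bnd k H ->
  pd r1 H = pd p1 G -> pd r2 H = pd p2 G ->
  exists Z, pd p2 (pd r1 Z) - pd r2 (pd p1 Z) = 0 /\
    pd t1 (pd r1 Z) + pd r2 (pd t2 Z) = G /\
    pd t1 (pd p1 Z) + pd p2 (pd t2 Z) = H /\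
    (forall w, w != t1 -> w != t2 -> w != p1 -> w != p2 ->
       w != r1 -> w != r2 -> free w G -> free w H -> free w Z).
Proof.
move=> d24 d64 d26 d34 d44 d14 d21 d61 d31 d4x1.
have d12 : t1 != t2 by rewrite eq_sym.
elim=> [|k IH] G H bG bH c1 c2.
  have -> := bnd0 _ bG; have -> := bnd0 _ bH.
  exists 0; rewrite (pd0 r1) (pd0 p1) (pd0 t2) !pd0 subr0 addr0.
  split; first exact: erefl.
  split; first exact: erefl.
  split; first exact: erefl.
  by move=> w *; exact: (pd0 w).
have c1' : pd r1 (pd t1 H) = pd p1 (pd t1 G).
  rewrite (pdC r1 t1 H) c1 (pdC t1 p1 G); exact: erefl.
have c2' : pd r2 (pd t1 H) = pd p2 (pd t1 G).
  rewrite (pdC r2 t1 H) c2 (pdC t1 p2 G); exact: erefl.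
have [Y [mY [BY [AY fY]]]] :=
  IH (pd t1 G) (pd t1 H) (bnd_pd _ _ _ bG) (bnd_pd _ _ _ bH) c1' c2'.
have [G' eG'] : exists G', G' = E t1 (G - pd r1 Y) := ex_intro _ _ erefl.
have [H' eH'] : exists H', H' = E t1 (H - pd p1 Y) := ex_intro _ _ erefl.
have mY' : pd r2 (pd p1 Y) = pd p2 (pd r1 Y).
  exact: (esym (subr0_eq mY)).
have cP : pd r2 H' = pd p2 G'.
  rewrite eH' eG' (pdE_comm r2 t1 (H - pd p1 Y) d24) (pdE_comm p2 t1 (G - pd r1 Y) d64).
  rewrite (pdB r2 H (pd p1 Y)) (pdB p2 G (pd r1 Y)) c2 mY'.
  exact: erefl.
have [Y' [Y'1 [Y'2 fY']]] : exists Y', pd r2 Y' = G' /\ pd p2 Y' = H' /\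
   (forall w, w != r2 -> w != p2 -> free w G' -> free w H' -> free w Y').
  exists (Poi r2 p2 G' H'); split; first exact: Poi1.
  split; first exact: (Poi2 _ _ _ _ d26 cP).
  move=> w wr wp; exact: freePoi.
have fY4 : pd t1 Y' = 0.
  have d42 : t1 != r2 by rewrite eq_sym.
  have d46 : t1 != p2 by rewrite eq_sym.
  apply: (fY' t1 d42 d46); [rewrite eG' | rewrite eH']; exact: freeEs.
exists (T t1 Y + T t2 Y'); split; [|split; [|split]].
- exact: (Zstep_m _ _ _ _ _ _ _ _ _ _ _ _ d64 d44 d24 d34 d61 d4x1 d21 d31 mY Y'1 Y'2 c1 eG' eH').
- exact: (Zstep_B _ _ _ _ _ _ _ _ d44 d12 d4x1 d24 d14 Y'1 fY4 BY eG').
- exact: (Zstep_B _ _ _ _ _ _ _ _ d34 d12 d31 d64 d14 Y'2 fY4 AY eH').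
move=> w w1 w2 w3 w4 w5 w6 fG fH.
have fYw : free w Y := fY w w1 w2 w3 w4 w5 w6 (freepd _ _ _ fG) (freepd _ _ _ fH).
apply: freeD; first exact: (freeT _ _ _ w1 fYw).
apply: (freeT _ _ _ w2); apply: (fY' w w6 w4).
  rewrite eG'; exact: (freeE _ _ _ w1 (freeB _ _ _ fG (freepd _ _ _ fYw))).
rewrite eH'; exact: (freeE _ _ _ w1 (freeB _ _ _ fH (freepd _ _ _ fYw))).
Qed.
Lemma neqs {a b : 'I_10} (h : a != b) : b != a. Proof. by rewrite eq_sym. Qed.

Lemma pdpd_comm w a b X : pd w (pd a (pd b X)) = pd a (pd b (pd w X)).
Proof. rewrite (pdC w a) (pdC w b); exact: erefl. Qed.

Definition Aop (a1 b1 a2 b2 a3 b3 : 'I_10) (X : Pol) :=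
  pd a1 (pd b1 X) - pd a2 (pd b2 X) + pd a3 (pd b3 X).

Lemma Aop_pd w a1 b1 a2 b2 a3 b3 X :
  pd w (Aop a1 b1 a2 b2 a3 b3 X) = Aop a1 b1 a2 b2 a3 b3 (pd w X).
Proof.
rewrite /Aop (pdD w) (pdB w) (pdpd_comm w a1 b1 X) (pdpd_comm w a2 b2 X).
rewrite (pdpd_comm w a3 b3 X); exact: erefl.
Qed.

Lemma AopD a1 b1 a2 b2 a3 b3 X Y :
  Aop a1 b1 a2 b2 a3 b3 (X + Y) = Aop a1 b1 a2 b2 a3 b3 X + Aop a1 b1 a2 b2 a3 b3 Y.
Proof.
rewrite /Aop (pdD b1) (pdD a1) (pdD b2) (pdD a2) (pdD b3) (pdD a3).
move: (pd a1 (pd b1 X)) (pd a1 (pd b1 Y)) (pd a2 (pd b2 X)) (pd a2 (pd b2 Y))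
  (pd a3 (pd b3 X)) (pd a3 (pd b3 Y)) => u1 u2 u3 u4 u5 u6.
ring.
Qed.

Definition Lop (a b c d : 'I_10) (X : Pol) := - (pd a (pd b X) + pd c (pd d X)).

Lemma get_q (x1 x2 x3 x4 y1 y2 y3 y4 y5 y6 : 'I_10) (x1x2 : x1 != x2) (x1x3 : x1 != x3) (x1x4 : x1 != x4) (x1y1 : x1 != y1) (x1y2 : x1 != y2) (x1y3 : x1 != y3) (x1y4 : x1 != y4) (x1y5 : x1 != y5) (x1y6 : x1 != y6) (x2x3 : x2 != x3) (x2x4 : x2 != x4) (x2y1 : x2 != y1) (x2y2 : x2 != y2) (x2y3 : x2 != y3) (x2y4 : x2 != y4) (x2y5 : x2 != y5) (x2y6 : x2 != y6) (x3x4 : x3 != x4) (x3y1 : x3 != y1) (x3y2 : x3 != y2) (x3y3 : x3 != y3) (x3y4 : x3 != y4) (x3y5 : x3 != y5) (x3y6 : x3 != y6) (x4y1 : x4 != y1) (x4y2 : x4 != y2) (x4y3 : x4 != y3) (x4y4 : x4 != y4) (x4y5 : x4 != y5) (x4y6 : x4 != y6) (y1y2 : y1 != y2) (y1y3 : y1 != y3) (y1y4 : y1 != y4) (y1y5 : y1 != y5) (y1y6 : y1 != y6) (y2y3 : y2 != y3) (y2y4 : y2 != y4) (y2y5 : y2 != y5) (y2y6 : y2 != y6) (y3y4 : y3 != y4) (y3y5 : y3 != y5) (y3y6 : y3 != y6) (y4y5 : y4 != y5) (y4y6 : y4 != y6) (y5y6 : y5 != y6) (f : Pol) :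
  free x4 f -> free y2 f -> free y1 f -> free y3 f ->
  exists q, (free x4 q /\ free y2 q /\ free y1 q /\ free y3 q) /\
    Aop y4 x3 y5 x2 y6 x1 q = f.
Proof.
move=> f4 f2 f1 f3.
pose S := fun X => free x4 X /\ free y2 X /\ free y1 X /\ free y3 X.
have Lsub : forall p q, Lop y4 x3 y6 x1 (p - q) = Lop y4 x3 y6 x1 p - Lop y4 x3 y6 x1 q.
  move=> p q; rewrite /Lop (pdB x3) (pdB y4) (pdB x1) (pdB y6).
  move: (pd y4 (pd x3 p)) (pd y4 (pd x3 q)) (pd y6 (pd x1 p)) (pd y6 (pd x1 q)) => u1 u2 u3 u4.
  ring.
have LTu : forall p, Lop y4 x3 y6 x1 (T y5 p) = T y5 (Lop y4 x3 y6 x1 p).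
  move=> p; rewrite /Lop (pdT2 _ _ _ p y4y5 x3y5) (pdT2 _ _ _ p (neqs y5y6) x1y5).
  rewrite -(TD y5) -(TN y5); exact: erefl.
have LTv : forall p, Lop y4 x3 y6 x1 (T x2 p) = T x2 (Lop y4 x3 y6 x1 p).
  move=> p; rewrite /Lop (pdT2 _ _ _ p (neqs x2y4) (neqs x2x3)) (pdT2 _ _ _ p (neqs x2y6) x1x2).
  rewrite -(TD x2) -(TN x2); exact: erefl.
have Lb : forall n p, bnd n.+1 p -> bnd n (Lop y4 x3 y6 x1 p).
  move=> n p h; rewrite /Lop.
  exact: (bndN _ _ (bndD _ _ _ (bnd_pd2 _ _ _ _ h) (bnd_pd2 _ _ _ _ h))).
have Ssub : forall p q, S p -> S q -> S (p - q).
  move=> p q [a1 [a2 [a3 a4]]] [b1 [b2 [b3 b4]]].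
  split; first exact: freeB. split; first exact: freeB. split; first exact: freeB.
  exact: freeB.
have STu : forall p, S p -> S (T y5 p).
  move=> p [a1 [a2 [a3 a4]]].
  split; first exact: (freeT _ _ _ x4y5 a1). split; first exact: (freeT _ _ _ y2y5 a2).
  split; first exact: (freeT _ _ _ y1y5 a3). exact: (freeT _ _ _ y3y5 a4).
have STv : forall p, S p -> S (T x2 p).
  move=> p [a1 [a2 [a3 a4]]].
  split; first exact: (freeT _ _ _ (neqs x2x4) a1).
  split; first exact: (freeT _ _ _ (neqs x2y2) a2).
  split; first exact: (freeT _ _ _ (neqs x2y1) a3). exact: (freeT _ _ _ (neqs x2y3) a4).
have fL : forall w p, free w p -> free w (Lop y4 x3 y6 x1 p).
  move=> w p h; rewrite /Lop; apply: freeN; apply: freeD.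
    exact: (freepd _ _ _ (freepd _ _ _ h)).
  exact: (freepd _ _ _ (freepd _ _ _ h)).
have SL : forall p, S p -> S (Lop y4 x3 y6 x1 p).
  move=> p [a1 [a2 [a3 a4]]].
  split; first exact: fL. split; first exact: fL. split; first exact: fL. exact: fL.
have Sf : S (- f).
  split; first exact: freeN. split; first exact: freeN. split; first exact: freeN.
  exact: freeN.
have [q [Sq hq]] := surj y5 x2 (Lop y4 x3 y6 x1) S (neqs x2y5) Lsub LTu LTv Lb Ssub STu STv SL (- f) Sf.
exists q; split; first exact: Sq.
have -> : f = - (pd y5 (pd x2 q) + Lop y4 x3 y6 x1 q) by rewrite hq opprK.
rewrite /Aop /Lop.
move: (pd y4 (pd x3 q)) (pd y5 (pd x2 q)) (pd y6 (pd x1 q)) => u1 u2 u3.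
ring.
Qed.

Lemma main_gen (x1 x2 x3 x4 y1 y2 y3 y4 y5 y6 : 'I_10) (x1x2 : x1 != x2) (x1x3 : x1 != x3) (x1x4 : x1 != x4) (x1y1 : x1 != y1) (x1y2 : x1 != y2) (x1y3 : x1 != y3) (x1y4 : x1 != y4) (x1y5 : x1 != y5) (x1y6 : x1 != y6) (x2x3 : x2 != x3) (x2x4 : x2 != x4) (x2y1 : x2 != y1) (x2y2 : x2 != y2) (x2y3 : x2 != y3) (x2y4 : x2 != y4) (x2y5 : x2 != y5) (x2y6 : x2 != y6) (x3x4 : x3 != x4) (x3y1 : x3 != y1) (x3y2 : x3 != y2) (x3y3 : x3 != y3) (x3y4 : x3 != y4) (x3y5 : x3 != y5) (x3y6 : x3 != y6) (x4y1 : x4 != y1) (x4y2 : x4 != y2) (x4y3 : x4 != y3) (x4y4 : x4 != y4) (x4y5 : x4 != y5) (x4y6 : x4 != y6) (y1y2 : y1 != y2) (y1y3 : y1 != y3) (y1y4 : y1 != y4) (y1y5 : y1 != y5) (y1y6 : y1 != y6) (y2y3 : y2 != y3) (y2y4 : y2 != y4) (y2y5 : y2 != y5) (y2y6 : y2 != y6) (y3y4 : y3 != y4) (y3y5 : y3 != y5) (y3y6 : y3 != y6) (y4y5 : y4 != y5) (y4y6 : y4 != y6) (y5y6 : y5 != y6) (P0 : Pol) :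
  free y1 P0 -> free y3 P0 ->
  pd y6 (pd x4 P0) - pd y2 (pd x3 P0) = 0 ->
  Aop y4 x3 y5 x2 y6 x1 P0 = 0 ->
  exists K : Pol, free y1 K /\ free y3 K /\
   pd y4 (pd y3 K) - pd y5 (pd y2 K) + pd y6 (pd y1 K) = - pd y6 P0 /\
   pd y6 (pd x4 K) - pd y2 (pd x3 K) + pd y3 (pd x2 K) = 0 /\
   pd y5 (pd x4 K) - pd y1 (pd x3 K) + pd y3 (pd x1 K) = pd x3 P0 /\
   pd y4 (pd x4 K) - pd y1 (pd x2 K) + pd y2 (pd x1 K) = pd x2 P0 /\
   pd y4 (pd x3 K) - pd y5 (pd x2 K) + pd y6 (pd x1 K) = 0.
Proof.
move=> f1P f3P D1P D4P.
have cQ : pd x4 (pd y6 P0) = pd y2 (pd x3 P0).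
  rewrite (pdC x4 y6 P0); exact: (subr0_eq D1P).
have [Q [Q1 [Q2 [fQ1 fQ3]]]] : exists Q, pd x4 Q = pd x3 P0 /\ pd y2 Q = pd y6 P0 /\
    free y1 Q /\ free y3 Q.
  exists (Poi x4 y2 (pd x3 P0) (pd y6 P0)); split; first exact: Poi1.
  split; first exact: (Poi2 _ _ _ _ x4y2 cQ).
  split.
    exact: (freePoi y1 x4 y2 _ _ (neqs x4y1) y1y2 (freepd y1 x3 P0 f1P) (freepd y1 y6 P0 f1P)).
  exact: (freePoi y3 x4 y2 _ _ (neqs x4y3) (neqs y2y3) (freepd y3 x3 P0 f3P) (freepd y3 y6 P0 f3P)).

have fAQ : free x4 (Aop y4 x3 y5 x2 y6 x1 Q) /\ free y2 (Aop y4 x3 y5 x2 y6 x1 Q).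
  split.
    rewrite /free (Aop_pd x4) Q1 -(Aop_pd x3) D4P; exact: (pd0 x3).
  rewrite /free (Aop_pd y2) Q2 -(Aop_pd y6) D4P; exact: (pd0 y6).
have fAQ1 : free y1 (Aop y4 x3 y5 x2 y6 x1 Q) by rewrite /free (Aop_pd y1) fQ1 /Aop !pd0 subr0 addr0.
have fAQ3 : free y3 (Aop y4 x3 y5 x2 y6 x1 Q) by rewrite /free (Aop_pd y3) fQ3 /Aop !pd0 subr0 addr0.
have [q [[q4 [q2 [q1 q3]]] Aq]] := get_q x1 x2 x3 x4 y1 y2 y3 y4 y5 y6 x1x2 x1x3 x1x4 x1y1 x1y2 x1y3 x1y4 x1y5 x1y6 x2x3 x2x4 x2y1 x2y2 x2y3 x2y4 x2y5 x2y6 x3x4 x3y1 x3y2 x3y3 x3y4 x3y5 x3y6 x4y1 x4y2 x4y3 x4y4 x4y5 x4y6 y1y2 y1y3 y1y4 y1y5 y1y6 y2y3 y2y4 y2y5 y2y6 y3y4 y3y5 y3y6 y4y5 y4y6 y5y6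
   (- Aop y4 x3 y5 x2 y6 x1 Q) (freeN _ _ fAQ.1) (freeN _ _ fAQ.2) (freeN _ _ fAQ1) (freeN _ _ fAQ3).
have [X eX] : exists X : Pol, X = Q + q := ex_intro _ _ erefl.
have AX : Aop y4 x3 y5 x2 y6 x1 X = 0 by rewrite eX AopD Aq subrr.
have X4 : pd x4 X = pd x3 P0 by rewrite eX (pdD x4) Q1 q4 addr0.
have X2 : pd y2 X = pd y6 P0 by rewrite eX (pdD y2) Q2 q2 addr0.
have fX1 : free y1 X by rewrite eX; exact: freeD.
have fX3 : free y3 X by rewrite eX; exact: freeD.

have [G eG] : exists G : Pol, G = E y5 (pd x2 P0) := ex_intro _ _ erefl.
have [H eH] : exists H : Pol, H = E y5 (pd x2 X) := ex_intro _ _ erefl.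
have c1 : pd x4 H = pd x3 G.
  rewrite eH eG (pdE_comm x4 y5 _ x4y5) (pdE_comm x3 y5 _ x3y5) (pdC x4 x2 X) X4.
  rewrite (pdC x3 x2 P0); exact: erefl.
have c2 : pd y2 H = pd y6 G.
  rewrite eH eG (pdE_comm y2 y5 _ y2y5) (pdE_comm y6 y5 _ (neqs y5y6)) (pdC y2 x2 X) X2.
  rewrite (pdC y6 x2 P0); exact: erefl.
have bG := bnd_mono _ _ _ (leq_addr (msize H) (msize G)) (bnd_msize G).
have bH := bnd_mono _ _ _ (leq_addl (msize G) (msize H)) (bnd_msize H).
have [Z [mZ [BZ [AZ fZ]]]] := Zlem y4 x1 x3 y6 x4 y2 y2y4 (neqs y4y6) y2y6 x3y4 x4y4 x1y4
   (neqs x1y2) (neqs x1y6) (neqs x1x3) (neqs x1x4) _ G H bG bH c1 c2.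
have fG5 : free y5 G by rewrite eG; exact: freeEs.
have fH5 : free y5 H by rewrite eH; exact: freeEs.
have fZ5 : pd y5 Z = 0 :=
  fZ y5 (neqs y4y5) (neqs x1y5) (neqs x3y5) y5y6 (neqs x4y5) (neqs y2y5) fG5 fH5.
have fG1 : free y1 G by rewrite eG; exact: (freeE _ _ _ y1y5 (freepd _ _ _ f1P)).
have fH1 : free y1 H by rewrite eH; exact: (freeE _ _ _ y1y5 (freepd _ _ _ fX1)).
have fG3 : free y3 G by rewrite eG; exact: (freeE _ _ _ y3y5 (freepd _ _ _ f3P)).
have fH3 : free y3 H by rewrite eH; exact: (freeE _ _ _ y3y5 (freepd _ _ _ fX3)).
have fZ1 : free y1 Z :=
  fZ y1 y1y4 (neqs x1y1) (neqs x3y1) y1y6 (neqs x4y1) y1y2 fG1 fH1.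
have fZ3 : free y3 Z :=
  fZ y3 y3y4 (neqs x1y3) (neqs x3y3) y3y6 (neqs x4y3) (neqs y2y3) fG3 fH3.
have k1 : pd y1 (T y5 X + Z) = 0 := freeD _ _ _ (freeT _ _ _ y1y5 fX1) fZ1.
have k3 : pd y3 (T y5 X + Z) = 0 := freeD _ _ _ (freeT _ _ _ y3y5 fX3) fZ3.
exists (T y5 X + Z); split; first exact: k1.
split; first exact: k3.
split.
  rewrite k1 k3 (pd0 y4) (pd0 y6) (pdD y2) (pdD y5) (pdT2l _ _ X y2y5) X2 (pdC y5 y2 Z) fZ5.
  rewrite (pd0 y2); move: (pd y6 P0) => u; ring.
split.
  rewrite (pdC y3 x2) k3 (pd0 x2) addr0.
  rewrite (pdD x4) (pdD y6) (pdD x3) (pdD y2) (pdT2 _ _ _ X (neqs y5y6) x4y5) (pdT2 _ _ _ X y2y5 x3y5).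
  rewrite X4 (pdC y2 x3 X) X2 (pdC x3 y6 P0) (subr0_eq mZ); exact: subrr.
split.
  rewrite (pdC y1 x3) k1 (pd0 x3) (pdC y3 x1) k3 (pd0 x1) subr0 addr0.
  rewrite (pdD x4) (pdD y5) (pdT2l _ _ X x4y5) X4 (pdC y5 x4 Z) fZ5 (pd0 x4) addr0; exact: erefl.
split.
  rewrite (pdC y1 x2) k1 (pd0 x2) subr0.
  rewrite (pdD x4) (pdD y4) (pdD x1) (pdD y2) (pdT2 _ _ _ X y4y5 x4y5) (pdT2 _ _ _ X y2y5 x1y5).
  rewrite X4 (pdC y2 x1 X) X2 (pdC x1 y6 P0).
  have e4 : pd y4 (pd x3 P0) + pd y6 (pd x1 P0) = pd y5 (pd x2 P0).
    move: D4P; rewrite /Aop.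
    move: (pd y4 (pd x3 P0)) (pd y5 (pd x2 P0)) (pd y6 (pd x1 P0)) => u1 u2 u3 h.
    by rewrite -[u2]add0r -h; ring.
  have e : T y5 (pd y4 (pd x3 P0)) + T y5 (pd y6 (pd x1 P0)) = pd x2 P0 - G.
    by rewrite -(TD y5) e4 (TpdE y5) eG.
  transitivity ((T y5 (pd y4 (pd x3 P0)) + T y5 (pd y6 (pd x1 P0))) +
     (pd y4 (pd x4 Z) + pd y2 (pd x1 Z))).
    move: (T y5 (pd y4 (pd x3 P0))) (T y5 (pd y6 (pd x1 P0))) (pd y4 (pd x4 Z)) (pd y2 (pd x1 Z)).
    move=> u1 u2 u3 u4; ring.
  rewrite e BZ; exact: subrK.
rewrite (pdD x3) (pdD y4) (pdD x2) (pdD y5) (pdD x1) (pdD y6).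
rewrite (pdT2 _ _ _ X y4y5 x3y5) (pdT2l _ _ X x2y5) (pdT2 _ _ _ X (neqs y5y6) x1y5).
rewrite (pdC y5 x2 Z) fZ5 (pd0 x2) addr0.
have eA : pd y4 (pd x3 X) + pd y6 (pd x1 X) = pd y5 (pd x2 X).
  move: AX; rewrite /Aop.
  move: (pd y4 (pd x3 X)) (pd y5 (pd x2 X)) (pd y6 (pd x1 X)) => u1 u2 u3 h.
  by rewrite -[u2]add0r -h; ring.
have e : T y5 (pd y4 (pd x3 X)) + T y5 (pd y6 (pd x1 X)) = pd x2 X - H.
  by rewrite -(TD y5) eA (TpdE y5) eH.
transitivity ((T y5 (pd y4 (pd x3 X)) + T y5 (pd y6 (pd x1 X))) +
   (pd y4 (pd x3 Z) + pd y6 (pd x1 Z)) - pd x2 X).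
  move: (T y5 (pd y4 (pd x3 X))) (T y5 (pd y6 (pd x1 X))) (pd y4 (pd x3 Z)) (pd y6 (pd x1 Z)) (pd x2 X).
  move=> u1 u2 u3 u4 u5; ring.
rewrite e AZ subrK; exact: subrr.
Qed.

Theorem mainTheorem9 (P : Pol) (N : nat) (Pi : nat -> Pol) :
  indep (vy 3) P ->
  P = \sum_(i < N.+1) 'X_(vy 1) ^+ i * Pi i ->
  (forall i, indep (vy 1) (Pi i)) ->
  opD P = 0 -> opD1 P = 0 -> opD2 P = 0 -> opD3 P = 0 -> opD4 P = 0 ->
  exists K : Pol,
    indep (vy 1) K /\ indep (vy 3) K /\
    opD K = - pd (vy 6) (Pi 0%N) /\ opD1 K = 0 /\
    opD2 K = pd (vx 3) (Pi 0%N) /\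
    opD3 K = pd (vx 2) (Pi 0%N) /\ opD4 K = 0.
Proof.
move=> hP3 hP hPi _ D10 _ _ D40.
have x1x2 : (vx 1) != (vx 2) by dv.
have x1x3 : (vx 1) != (vx 3) by dv.
have x1x4 : (vx 1) != (vx 4) by dv.
have x1y1 : (vx 1) != (vy 1) by dv.
have x1y2 : (vx 1) != (vy 2) by dv.
have x1y3 : (vx 1) != (vy 3) by dv.
have x1y4 : (vx 1) != (vy 4) by dv.
have x1y5 : (vx 1) != (vy 5) by dv.
have x1y6 : (vx 1) != (vy 6) by dv.
have x2x3 : (vx 2) != (vx 3) by dv.
have x2x4 : (vx 2) != (vx 4) by dv.
have x2y1 : (vx 2) != (vy 1) by dv.
have x2y2 : (vx 2) != (vy 2) by dv.
have x2y3 : (vx 2) != (vy 3) by dv.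
have x2y4 : (vx 2) != (vy 4) by dv.
have x2y5 : (vx 2) != (vy 5) by dv.
have x2y6 : (vx 2) != (vy 6) by dv.
have x3x4 : (vx 3) != (vx 4) by dv.
have x3y1 : (vx 3) != (vy 1) by dv.
have x3y2 : (vx 3) != (vy 2) by dv.
have x3y3 : (vx 3) != (vy 3) by dv.
have x3y4 : (vx 3) != (vy 4) by dv.
have x3y5 : (vx 3) != (vy 5) by dv.
have x3y6 : (vx 3) != (vy 6) by dv.
have x4y1 : (vx 4) != (vy 1) by dv.
have x4y2 : (vx 4) != (vy 2) by dv.
have x4y3 : (vx 4) != (vy 3) by dv.
have x4y4 : (vx 4) != (vy 4) by dv.
have x4y5 : (vx 4) != (vy 5) by dv.
have x4y6 : (vx 4) != (vy 6) by dv.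
have y1y2 : (vy 1) != (vy 2) by dv.
have y1y3 : (vy 1) != (vy 3) by dv.
have y1y4 : (vy 1) != (vy 4) by dv.
have y1y5 : (vy 1) != (vy 5) by dv.
have y1y6 : (vy 1) != (vy 6) by dv.
have y2y3 : (vy 2) != (vy 3) by dv.
have y2y4 : (vy 2) != (vy 4) by dv.
have y2y5 : (vy 2) != (vy 5) by dv.
have y2y6 : (vy 2) != (vy 6) by dv.
have y3y4 : (vy 3) != (vy 4) by dv.
have y3y5 : (vy 3) != (vy 5) by dv.
have y3y6 : (vy 3) != (vy 6) by dv.
have y4y5 : (vy 4) != (vy 5) by dv.
have y4y6 : (vy 4) != (vy 6) by dv.
have y5y6 : (vy 5) != (vy 6) by dv.
have f1P : free (vy 1) (Pi 0%N) := (indep_pd _ _).1 (hPi 0%N).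
have fP3 : free (vy 3) P := (indep_pd _ _).1 hP3.
have fPi : forall i, free (vy 1) (Pi i) := fun i => (indep_pd _ _).1 (hPi i).
have f3P : free (vy 3) (Pi 0%N).
  apply: (coef0 N (fun i => pd (vy 3) (Pi i))).
    by move=> i; exact: (freepd _ _ _ (fPi i)).
  rewrite -(pdSum (vy 3) N Pi (neqs y1y3)) -hP; exact: fP3.
have D1P : pd (vy 6) (pd (vx 4) (Pi 0%N)) - pd (vy 2) (pd (vx 3) (Pi 0%N)) = 0.
  apply: (coef0 N (fun i => pd (vy 6) (pd (vx 4) (Pi i)) - pd (vy 2) (pd (vx 3) (Pi i)))).
    move=> i; apply: freeB; exact: (freepd _ _ _ (freepd _ _ _ (fPi i))).
  rewrite -(SumB N (fun i => pd (vy 6) (pd (vx 4) (Pi i))) (fun i => pd (vy 2) (pd (vx 3) (Pi i)))).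
  rewrite -(pdSum (vy 6) N (fun i => pd (vx 4) (Pi i)) (neqs y1y6)).
  rewrite -(pdSum (vx 4) N Pi x4y1).
  rewrite -(pdSum (vy 2) N (fun i => pd (vx 3) (Pi i)) (neqs y1y2)).
  rewrite -(pdSum (vx 3) N Pi x3y1).
  rewrite -hP.
  move: D10; rewrite /opD1 (pdC (vy 3) (vx 2) P) fP3 (pd0 (vx 2)) addr0; exact.
have D4P : Aop (vy 4) (vx 3) (vy 5) (vx 2) (vy 6) (vx 1) (Pi 0%N) = 0.
  apply: (coef0 N (fun i => Aop (vy 4) (vx 3) (vy 5) (vx 2) (vy 6) (vx 1) (Pi i))).
    move=> i; rewrite /Aop; apply: freeD; first apply: freeB.
    - exact: (freepd _ _ _ (freepd _ _ _ (fPi i))).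
    - exact: (freepd _ _ _ (freepd _ _ _ (fPi i))).
    - exact: (freepd _ _ _ (freepd _ _ _ (fPi i))).
  rewrite /Aop.
  rewrite -(SumD N (fun i => pd (vy 4) (pd (vx 3) (Pi i)) - pd (vy 5) (pd (vx 2) (Pi i))) (fun i => pd (vy 6) (pd (vx 1) (Pi i)))).
  rewrite -(SumB N (fun i => pd (vy 4) (pd (vx 3) (Pi i))) (fun i => pd (vy 5) (pd (vx 2) (Pi i)))).
  rewrite -(pdSum (vy 4) N (fun i => pd (vx 3) (Pi i)) (neqs y1y4)).
  rewrite -(pdSum (vx 3) N Pi x3y1).
  rewrite -(pdSum (vy 5) N (fun i => pd (vx 2) (Pi i)) (neqs y1y5)).
  rewrite -(pdSum (vx 2) N Pi x2y1).
  rewrite -(pdSum (vy 6) N (fun i => pd (vx 1) (Pi i)) (neqs y1y6)).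
  rewrite -(pdSum (vx 1) N Pi x1y1).
  rewrite -hP; exact: D40.
have [K [fK1 [fK3 [e1 [e2 [e3 [e4 e5]]]]]]] :=
  main_gen (vx 1) (vx 2) (vx 3) (vx 4) (vy 1) (vy 2) (vy 3) (vy 4) (vy 5) (vy 6) x1x2 x1x3 x1x4 x1y1 x1y2 x1y3 x1y4 x1y5 x1y6 x2x3 x2x4 x2y1 x2y2 x2y3 x2y4 x2y5 x2y6 x3x4 x3y1 x3y2 x3y3 x3y4 x3y5 x3y6 x4y1 x4y2 x4y3 x4y4 x4y5 x4y6 y1y2 y1y3 y1y4 y1y5 y1y6 y2y3 y2y4 y2y5 y2y6 y3y4 y3y5 y3y6 y4y5 y4y6 y5y6
    (Pi 0%N) f1P f3P D1P D4P.
exists K; split; first exact: ((indep_pd _ _).2 fK1).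
split; first exact: ((indep_pd _ _).2 fK3).
by rewrite /opD /opD1 /opD2 /opD3 /opD4; do !split.
Qed.
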